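(* There is no contravariant functor $F\colon\mathsf{Ring}\to\mathsf{Set}$ whose restriction to the full subcategory $\mathsf{CommRing}$ is isomorphic to $\operatorname{Spec}$ and such that, for every ring $R$, the set $F(R)$ is in bijection with the set of prime ideals of $R$.
   Context: Rings are unital and homomorphisms preserve the identity. A (two-sided) ideal $P$ of a ring $R$ is prime if $P\neq R$ and for all two-sided ideals $I,J$ with $IJ\subseteq P$, either $I\subseteq P$ or $J\subseteq P$. $\operatorname{Spec}$ is the contravariant functor on commutative rings sending a ring to its set of prime ideals and a homomorphism $f$ to $P\mapsto f^{-1}(P)$. *)

(* Defs.v *)
(* Rings = pzRingType (unital, possibly the zero ring);
   ring homomorphisms = {rmorphism R -> S} (preserve 0, +, *, 1). *)
From HB Require Import structures.
From mathcomp Require Import all_boot all_order all_algebra.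
Set Implicit Arguments. Unset Strict Implicit. Unset Printing Implicit Defensive.
Import GRing.Theory.
Local Open Scope ring_scope.

Definition is_ideal (R : pzRingType) (I : R -> Prop) : Prop :=
  [/\ I 0,
      (forall x y, I x -> I y -> I (x - y)),
      (forall r x, I x -> I (r * x)) &
      (forall r x, I x -> I (x * r))].

Definition ideal_mul (R : pzRingType) (I J : R -> Prop) : R -> Prop :=
  fun x => exists s : seq (R * R),
    (forall p, p \in s -> I p.1 /\ J p.2) /\ x = \sum_(p <- s) p.1 * p.2.

Definition prime_ideal (R : pzRingType) (P : R -> Prop) : Prop :=
  [/\ is_ideal P,
      (exists x, ~ P x) &
      (forall I J : R -> Prop, is_ideal I -> is_ideal J ->
         (forall x, ideal_mul I J x -> P x) ->
         (forall x, I x -> P x) \/ (forall x, J x -> P x))].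

Definition prime_spectrum (R : pzRingType) : Type := {P : R -> Prop | prime_ideal P}.

Definition is_contra_functor (F : pzRingType -> Type)
  (Fmap : forall R S : pzRingType, {rmorphism R -> S} -> F S -> F R) : Prop :=
  (forall (R : pzRingType) (h : {rmorphism R -> R}),
      h =1 id -> forall x, Fmap R R h x = x) /\
  (forall (R S T : pzRingType) (f : {rmorphism R -> S}) (g : {rmorphism S -> T})
          (h : {rmorphism R -> T}),
      h =1 g \o f -> forall x, Fmap R T h x = Fmap R S f (Fmap S T g x)).

(* The restriction of (F, Fmap) to commutative rings is naturally isomorphic to
   Spec: a family of bijections eta_A : F A -> Spec A, natural w.r.t. ring
   homomorphisms f : A -> B between commutative rings, where Spec f is
   P |-> f^{-1}(P). *)
Definition restricts_to_Spec (F : pzRingType -> Type)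
  (Fmap : forall R S : pzRingType, {rmorphism R -> S} -> F S -> F R) : Prop :=
  exists eta : forall A : comPzRingType, F A -> prime_spectrum A,
    (forall A : comPzRingType, bijective (eta A)) /\
    (forall (A B : comPzRingType) (f : {rmorphism A -> B}) (x : F B) (a : A),
        proj1_sig (eta A (Fmap A B f x)) a <-> proj1_sig (eta B x) (f a)).

(* Main.v *)
Require Import Defs.
From HB Require Import structures.
From mathcomp Require Import all_boot all_order all_algebra.
From mathcomp Require Import ring.
From Stdlib Require Import Classical ClassicalEpsilon.
Set Implicit Arguments. Unset Strict Implicit. Unset Printing Implicit Defensive.
Import GRing.Theory.
Local Open Scope ring_scope.

Definition vtab : seq (seq rat) := [:: [:: 0; 0; 0; 1]; [:: 0; 0; 1; 0]; [:: 1; -1; 0; 0]; [:: 1; 1; 0; 0]; [:: 0; 1; -1; 0]; [:: 0; 1; 1; 0]; [:: 1; 0; 0; 0]; [:: 0; 0; 1; -1]; [:: 1; -1; -1; -1]; [:: 1; -1; 1; 1]; [:: 1; 1; -1; -1]; [:: 1; 1; 1; 1]; [:: 0; 1; 0; -1]; [:: 0; 1; 0; 1]; [:: 1; 0; 0; 1]; [:: 1; 1; 1; -1]; [:: 1; -1; 1; -1]; [:: 1; 0; -1; 0]].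
Definition btab : seq (seq nat) := [:: [:: 0; 1; 2; 3]; [:: 0; 4; 5; 6]; [:: 7; 8; 9; 3]; [:: 7; 2; 10; 11]; [:: 1; 12; 13; 6]; [:: 4; 8; 14; 15]; [:: 12; 16; 17; 11]; [:: 13; 9; 17; 15]; [:: 5; 16; 14; 10]]%N.

Definition cf (v a : nat) : rat := nth 0 (nth [::] vtab v) a.
Definition bt (k i : nat) : nat := nth 0%N (nth [::] btab k) i.
Definition dotc (v w : nat) : rat := cf v 0 * cf w 0 + cf v 1 * cf w 1 + cf v 2 * cf w 2 + cf v 3 * cf w 3.
Definition nv v := dotc v v.

Definition M := 'M[rat]_4.
Definition Pm (v : nat) : M := \matrix_(a, b) (cf v a * cf v b / nv v).

Lemma sum4 (g : nat -> rat) : \sum_(i < 4) g i = g 0%N + g 1%N + g 2%N + g 3%N.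
Proof. by rewrite !big_ord_recr big_ord0 /= add0r. Qed.

Lemma PmM v w : Pm v *m Pm w =
  (dotc v w / (nv v * nv w)) *: \matrix_(a, c) (cf v a * cf w c).
Proof.
apply/matrixP => a c; rewrite !mxE.
rewrite (eq_bigr (fun b : 'I_4 => (cf v a * cf w c / (nv v * nv w)) * (cf v b * cf w b))); last first.
  by move=> b _; rewrite !mxE invfM; ring.
by rewrite -mulr_sumr (sum4 (fun n => cf v n * cf w n)) /dotc; ring.
Qed.

Definition chk_orth := all (fun k => all (fun i => all (fun j => (i == j) || (dotc (bt k i) (bt k j) == 0)) (iota 0 4)) (iota 0 4)) (iota 0 9).
Lemma chk_orthT : chk_orth. Proof. by vm_compute. Qed.
Definition chk_nz := all (fun v => nv v != 0) (iota 0 18).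
Lemma chk_nzT : chk_nz. Proof. by vm_compute. Qed.
Definition chk_sum := all (fun k => all (fun a => all (fun b =>
   cf (bt k 0) a * cf (bt k 0) b / nv (bt k 0) + cf (bt k 1) a * cf (bt k 1) b / nv (bt k 1)
 + cf (bt k 2) a * cf (bt k 2) b / nv (bt k 2) + cf (bt k 3) a * cf (bt k 3) b / nv (bt k 3)
   == (a == b)%:R) (iota 0 4)) (iota 0 4)) (iota 0 9).
Lemma chk_sumT : chk_sum. Proof. by vm_compute. Qed.
Definition chk_perm := perm_eq (flatten [seq [seq bt k i | i <- iota 0 4] | k <- iota 0 9]) (iota 0 18 ++ iota 0 18).
Lemma chk_permT : chk_perm. Proof. by vm_compute. Qed.

Lemma Pm_idem v : Pm v * Pm v = Pm v.
Proof.
have ->: Pm v * Pm v = Pm v *m Pm v by [].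
case: (eqVneq (nv v) 0) => h.
  have P0 : Pm v = 0 by apply/matrixP => a b; rewrite !mxE h invr0 mulr0.
  by rewrite P0 mul0mx.
rewrite PmM; apply/matrixP => a b; rewrite !mxE.
move: h; rewrite /nv => h; by field.
Qed.

Lemma inI (n m : nat) : (m < n)%N -> m \in iota 0 n.
Proof. by rewrite mem_iota. Qed.

Lemma Pm_orth (k : 'I_9) i j : (i < 4)%N -> (j < 4)%N -> i != j ->
  Pm (bt k i) * Pm (bt k j) = 0.
Proof.
move=> hi hj hij.
have := chk_orthT; move/allP/(_ _ (inI (ltn_ord k)))/allP/(_ _ (inI hi))/allP/(_ _ (inI hj)).
rewrite (negbTE hij) /= => /eqP h.
have ->: Pm (bt k i) * Pm (bt k j) = Pm (bt k i) *m Pm (bt k j) by [].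
by rewrite PmM h mul0r scale0r.
Qed.

Lemma Pm_sum (k : 'I_9) : Pm (bt k 0) + Pm (bt k 1) + Pm (bt k 2) + Pm (bt k 3) = 1.
Proof.
apply/matrixP => a b.
have := chk_sumT; move/allP/(_ _ (inI (ltn_ord k)))/allP/(_ _ (inI (ltn_ord a)))/allP/(_ _ (inI (ltn_ord b))).
move/eqP => h; rewrite !mxE h.
by [].
Qed.

Notation A := ((rat * rat) * (rat * rat))%type.
Notation B := (rat * rat)%type.

Lemma addB2 (V : zmodType) (x x' y y' : V) : (x - x') + (y - y') = (x + y) - (x' + y').
Proof. by rewrite opprD addrACA. Qed.

Lemma scaleMM (a b : rat) (P Q : M) : (a *: P) * (b *: Q) = (a * b) *: (P * Q).
Proof. by rewrite -scalerAl -scalerAr scalerA. Qed.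

Definition fr (k : 'I_9) (x : A) : M :=
  (x.1.1 *: Pm (bt k 0) + x.1.2 *: Pm (bt k 1)) + (x.2.1 *: Pm (bt k 2) + x.2.2 *: Pm (bt k 3)).

Lemma fr_zmod k : zmod_morphism (fr k).
Proof. by move=> x y; rewrite /fr /= !scalerBl !addB2. Qed.

Lemma fr_monoid k : monoid_morphism (fr k).
Proof.
split.
  by rewrite /fr /= !scale1r -(Pm_sum k) !addrA.
move=> x y; rewrite /fr /= !mulrDl !mulrDr !scaleMM !Pm_idem !Pm_orth //.
by rewrite !scaler0 !addr0 !add0r.
Qed.

HB.instance Definition _ (k : 'I_9) := GRing.isZmodMorphism.Build A M (fr k) (fr_zmod k).
HB.instance Definition _ (k : 'I_9) := GRing.isMonoidMorphism.Build A M (fr k) (fr_monoid k).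

Definition im (v : nat) (x : B) : M := x.1 *: Pm v + x.2 *: (1 - Pm v).

Lemma im_zmod v : zmod_morphism (im v).
Proof. by move=> x y; rewrite /im /= !scalerBl !addB2. Qed.

Lemma im_monoid v : monoid_morphism (im v).
Proof.
have e1 : Pm v * (1 - Pm v) = 0 by rewrite mulrBr mulr1 Pm_idem subrr.
have e2 : (1 - Pm v) * Pm v = 0 by rewrite mulrBl mul1r Pm_idem subrr.
have e3 : (1 - Pm v) * (1 - Pm v) = 1 - Pm v by rewrite mulrBr mulr1 e2 subr0.
split.
  by rewrite /im /= !scale1r addrC subrK.
move=> x y; rewrite /im /= !mulrDl !mulrDr !scaleMM Pm_idem e1 e2 e3.
by rewrite !scaler0 addr0 add0r.
Qed.

HB.instance Definition _ (v : nat) := GRing.isZmodMorphism.Build B M (im v) (im_zmod v).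
HB.instance Definition _ (v : nat) := GRing.isMonoidMorphism.Build B M (im v) (im_monoid v).

Definition sel (i j : nat) (x : B) : rat := if j == i then x.1 else x.2.
Definition gk (i : nat) (x : B) : A := ((sel i 0 x, sel i 1 x), (sel i 2 x, sel i 3 x)).

Lemma selB i j x y : sel i j (x - y) = sel i j x - sel i j y.
Proof. by rewrite /sel; case: ifP. Qed.
Lemma selM i j x y : sel i j (x * y) = sel i j x * sel i j y.
Proof. by rewrite /sel; case: ifP. Qed.
Lemma sel1 i j : sel i j 1 = 1.
Proof. by rewrite /sel; case: ifP. Qed.

Lemma gk_zmod i : zmod_morphism (gk i).
Proof. by move=> x y; rewrite /gk !selB. Qed.
Lemma gk_monoid i : monoid_morphism (gk i).
Proof. by split; [rewrite /gk !sel1 | move=> x y; rewrite /gk !selM]. Qed.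

HB.instance Definition _ (i : nat) := GRing.isZmodMorphism.Build B A (gk i) (gk_zmod i).
HB.instance Definition _ (i : nat) := GRing.isMonoidMorphism.Build B A (gk i) (gk_monoid i).

Lemma comp_eq (k : 'I_9) (i : nat) : (i < 4)%N -> im (bt k i) =1 fr k \o gk i.
Proof.
move=> hi x; rewrite /im /fr /gk /= -(Pm_sum k).
by case: i hi => [|[|[|[|i]]]] // _; rewrite /sel /=; apply/matrixP => r s; rewrite !mxE; ring.
Qed.


Section Primes.
Variable R : comPzRingType.
Variable p : R -> Prop.
Hypothesis hp : prime_ideal p.

Lemma pI0 : p 0. Proof. by case: hp => [[]]. Qed.
Lemma pIB x y : p x -> p y -> p (x - y). Proof. by case: hp => [[_ h _ _] _ _]; apply: h. Qed.
Lemma pIM r x : p x -> p (r * x). Proof. by case: hp => [[_ _ h _] _ _]; apply: h. Qed.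
Lemma pID x y : p x -> p y -> p (x + y).
Proof. by move=> hx hy; have := pIB hx (pIB pI0 hy); rewrite sub0r opprK. Qed.

Lemma prime_mul a b : p (a * b) -> p a \/ p b.
Proof.
move=> hab.
case: hp => _ _ /(_ (fun z => exists r, z = r * a) (fun z => exists r, z = r * b)).
have idl c : is_ideal (fun z : R => exists r, z = r * c).
  split.
  - by exists 0; rewrite mul0r.
  - by move=> x y [r ->] [s ->]; exists (r - s); rewrite mulrBl.
  - by move=> t x [r ->]; exists (t * r); rewrite mulrA.
  - by move=> t x [r ->]; exists (r * t); rewrite -!mulrA [c * t]mulrC.
case/(_ (idl a) (idl b)).
- move=> x [s [hs ->]]; elim: s hs => [|q s IH] hs.
    by rewrite big_nil; apply: pI0.
  rewrite big_cons; apply: pID; last by apply: IH => z zs; apply: hs; rewrite inE zs orbT.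
  have [[r ->] [t ->]] := hs q (mem_head _ _).
  have -> : r * a * (t * b) = (r * t) * (a * b) by rewrite mulrACA.
  exact: pIM.
- by move=> h; left; apply: h; exists 1; rewrite mul1r.
- by move=> h; right; apply: h; exists 1; rewrite mul1r.
Qed.

Lemma p1 : ~ p 1.
Proof.
move=> h1; case: hp => _ [x hx] _; apply: hx.
by rewrite -[x]mulr1; apply: pIM.
Qed.
End Primes.

Definition e (i : nat) : A := gk i (1, 0).

Lemma eM i j : (i < 4)%N -> (j < 4)%N -> i != j -> e i * e j = 0.
Proof.
by case: i => [|[|[|[|i]]]] //; case: j => [|[|[|[|j]]]] // _ _ _; apply/eqP; vm_compute.
Qed.

Lemma esum : e 0 + e 1 + e 2 + e 3 = 1.
Proof. by apply/eqP; vm_compute. Qed.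

Lemma four (p : A -> Prop) : prime_ideal p ->
  (exists2 i, (i < 4)%N & ~ p (e i)) /\
  (forall i j, (i < 4)%N -> (j < 4)%N -> i != j -> ~ p (e i) -> ~ p (e j) -> False).
Proof.
move=> hp; split.
  apply: NNPP => hn.
  have h i : (i < 4)%N -> p (e i).
    by move=> hi; apply: NNPP => he; apply: hn; exists i.
  apply: (p1 hp); rewrite -esum.
  by do !apply: pID => //; apply: h.
move=> i j hi hj hij ni nj.
have := pI0 hp; rewrite -(eM hi hj hij) => /(prime_mul hp); tauto.
Qed.

Lemma count1 (c : nat -> bool) : (exists2 i, (i < 4)%N & c i) ->
  (forall i j, (i < 4)%N -> (j < 4)%N -> i != j -> c i -> c j -> False) ->
  count c (iota 0 4) = 1%N.
Proof.
move=> [i hi ci] hu.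
move: (hu 0 1)%N (hu 0 2)%N (hu 0 3)%N (hu 1 2)%N (hu 1 3)%N (hu 2 3)%N.
move=> /(_ isT isT isT) h01 /(_ isT isT isT) h02 /(_ isT isT isT) h03.
move=> /(_ isT isT isT) h12 /(_ isT isT isT) h13 /(_ isT isT isT) h23.
rewrite /=.
case: i hi ci => [|[|[|[|i]]]] // _ ci; move: ci h01 h02 h03 h12 h13 h23;
 case: (c 0%N); case: (c 1%N); case: (c 2%N); case: (c 3%N) => //= *; exfalso; by intuition.
Qed.

Lemma mx_nz (a : M) : a <> 0 -> exists i j, a i j != 0.
Proof.
move=> ha; apply: NNPP => hn; apply: ha; apply/matrixP => i j; rewrite mxE.
by apply/eqP; apply: NNPP => hij; apply: hn; exists i, j; apply/negP.
Qed.

Lemma zero_prime : prime_ideal (fun m : M => m = 0).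
Proof.
split.
- split => //.
  + by move=> x y -> ->; rewrite subrr.
  + by move=> r x ->; rewrite mulr0.
  + by move=> r x ->; rewrite mul0r.
- by exists 1; apply/eqP; apply: oner_neq0.
move=> I J hI hJ hIJ.
apply: NNPP => hn.
have [a [Ia na]] : exists a, I a /\ a <> 0.
  by apply: NNPP => h; apply: hn; left => x Ix; apply: NNPP => nx; apply: h; exists x.
have [b [Jb nb]] : exists b, J b /\ b <> 0.
  by apply: NNPP => h; apply: hn; right => x Jx; apply: NNPP => nx; apply: h; exists x.
have [i [j hij]] := mx_nz na.
have [k [l hkl]] := mx_nz nb.
have IaE : I (a * delta_mx j k) by case: hI => _ _ _ h; apply: h.
have := hIJ (a * delta_mx j k * b).
have -> : a * delta_mx j k * b = col j a *m row k b.
  by rewrite colE rowE mulmxA -[(a *m _) *m _]mulmxA mul_delta_mx.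
move/(_ _)/matrixP/(_ i l).
rewrite !mxE big_ord1 !mxE => h.
suff: a i j * b k l = 0 by apply/eqP; rewrite mulf_neq0.
apply: h; exists [:: (a * delta_mx j k, b)]; split.
  by move=> q; rewrite inE => /eqP ->.
have h1 : col j a *m row k b = a * delta_mx j k * b by rewrite colE rowE mulmxA -[(a *m _) *m _]mulmxA mul_delta_mx.
by rewrite big_cons big_nil addr0 /= h1.
Qed.

Theorem corollary4p4 :
  ~ exists (F : pzRingType -> Type)
           (Fmap : forall R S : pzRingType, {rmorphism R -> S} -> F S -> F R),
      [/\ is_contra_functor Fmap,
          restricts_to_Spec Fmap &
          forall R : pzRingType, exists g : F R -> prime_spectrum R, bijective g].
Proof.
case=> F [Fmap [[_ Fcomp] [eta [_ Hnat]] Hbij]].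
have [g [g' _ _]] := Hbij M.
pose x := g' (exist _ _ zero_prime).
pose q (v : nat) := proj1_sig (eta B (Fmap B M (im v) x)).
pose col (v : nat) : bool := if excluded_middle_informative (q v (1, 0)) then false else true.
have key (k : 'I_9) i : (i < 4)%N ->
    (col (bt k i) <-> ~ proj1_sig (eta A (Fmap A M (fr k) x)) (e i)).
  move=> hi.
  have := Fcomp B A M (gk i) (fr k) (im (bt k i)) (@comp_eq k i hi) x.
  rewrite /col /q => ->.
  have := Hnat B A (gk i) (Fmap A M (fr k) x) (1, 0).
  rewrite /e; case: excluded_middle_informative => /= h1 h2; split => //.
    by move=> hn; case: hn; apply/h2.
  by move=> _ hp; apply: h1; apply/h2.
have cnt (k : nat) : (k < 9)%N -> count col [seq bt k i | i <- iota 0 4] = 1%N.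
  move=> hk; rewrite count_map.
  pose kk : 'I_9 := Ordinal hk.
  have [h1 h2] := four (proj2_sig (eta A (Fmap A M (fr kk) x))).
  apply: count1.
    by case: h1 => i hi hn; exists i => //; apply/(key kk i hi).
  move=> i j hi hj hij ci cj; apply: (h2 i j hi hj hij).
    by apply/(key kk i hi).
  by apply/(key kk j hj).
have := chk_permT; rewrite /chk_perm => /permP/(_ col).
have hm : map (count col \o (fun k => [seq bt k i | i <- iota 0 4])) (iota 0 9) = map (fun _ => 1%N) (iota 0 9).
  by apply/eq_in_map => k; rewrite mem_iota /= => hk; apply: cnt.
rewrite count_flatten count_cat -map_comp hm.
have -> : sumn (map (fun _ => 1%N) (iota 0 9)) = 9%N by [].
by move/(congr1 odd); rewrite oddD addbb.
Qed.
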